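(* For every integer $k\ge 2$ and every $h>k/(2k-1)$ there is an instance with $k$ groups of binary agents in which no allocation is $h$-democratic positive-MMS-fair.
   Context: There is a finite set $G$ of goods and $k$ groups $A_1,\dots,A_k$ with $n_i\ge1$ agents in $A_i$. A binary agent has an additive utility with $u_a(\{g\})\in\{0,1\}$. An allocation is a partition $(G_1,\dots,G_k)$ of $G$; agents of $A_i$ get $u_a(G_i)$. $\mathrm{MMS}^k_a(G)$ is the maximum over partitions of $G$ into $k$ sets of the minimum of $u_a$ over those sets. The allocation is positive-MMS-fair for $a\in A_i$ if $\mathrm{MMS}^k_a(G)>0$ implies $u_a(G_i)>0$. An allocation is $h$-democratic fair if for each $i$ at least $h\cdot n_i$ agents of $A_i$ find it fair. *)

(* Defs.v *)
From HB Require Import structures.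
From mathcomp Require Import all_boot all_order all_algebra.
Set Implicit Arguments. Unset Strict Implicit. Unset Printing Implicit Defensive.
Import Order.TTheory GRing.Theory Num.Theory.
Local Open Scope ring_scope.

(* A binary agent is given by its valuation v : G -> bool (u_a({g}) = v g).
   Its additive utility of a bundle S is the number of goods in S it values. *)
Definition util (G : finType) (v : G -> bool) (S : {set G}) : nat :=
  #|[set g in S | v g]|.

(* A partition of G into k (possibly empty) labelled sets is a map G -> 'I_k;
   bundle p j is the j-th part. *)
Definition bundle (G : finType) (k : nat) (p : {ffun G -> 'I_k}) (j : 'I_k)
  : {set G} := [set g | p g == j].

(* MMS^k_v(G) = max over partitions into k sets of the min utility of a part.
   The inner min uses #|G| as neutral element, which is harmless since every
   utility is <= #|G| and k >= 1 in all uses. *)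
Definition mms (G : finType) (k : nat) (v : G -> bool) : nat :=
  \max_(p : {ffun G -> 'I_k}) \big[minn/#|G|]_(j < k) util v (bundle p j).

Definition pos_mms_fair (G : finType) (k : nat) (v : G -> bool)
  (p : {ffun G -> 'I_k}) (i : 'I_k) : bool :=
  (0 < mms k v)%N ==> (0 < util v (bundle p i))%N.

Definition h_democratic_fair (R : realFieldType) (h : R) (G : finType) (k : nat)
  (n : 'I_k -> nat) (u : forall i : 'I_k, 'I_(n i) -> G -> bool)
  (p : {ffun G -> 'I_k}) : Prop :=
  forall i : 'I_k,
    h * (n i)%:R <= (#|[set a : 'I_(n i) | pos_mms_fair (u i a) p i]|)%:R.

(* Main.v *)
Require Import Defs.
From HB Require Import structures.
From mathcomp Require Import all_boot all_order all_algebra zify.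
Import Order.TTheory GRing.Theory Num.Theory.

Definition offs {m : nat} (a g : 'I_m.+1) : nat :=
  if (a <= g)%N then (g - a)%N else (g + m.+1 - a)%N.
Definition vv {m : nat} (kk : nat) (a g : 'I_m.+1) : bool := (offs a g < kk.+1)%N.

Lemma count_vv (m kk : nat) (g : 'I_m.+1) :
  (#|[set a | vv kk a g]| <= kk.+1)%N.
Proof.
pose F (x : 'I_kk.+1) : 'I_m.+1 :=
  inord (if (x <= g)%N then (g - x)%N else (g + m.+1 - x)%N).
apply: (@leq_trans #|[set F x | x in [set: 'I_kk.+1]]|).
2: by apply: (leq_trans (leq_imset_card _ _)); rewrite cardsT card_ord.
apply: subset_leq_card; apply/subsetP => a; rewrite inE /vv /offs => Ha.
have Hx : ((if (a <= g)%N then (g - a)%N else (g + m.+1 - a)%N) < kk.+1)%N by [].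
apply/imsetP; exists (Ordinal Hx) => //.
have := ltn_ord a; have := ltn_ord g => Hg Ha'.
apply: val_inj; rewrite /F /=; clear Ha Hx; case: (leqP a g) => Hag.
  by rewrite leq_subr inordK; lia.
case: leqP => H2; rewrite inordK; lia.
Qed.

Lemma card_bundles (G : finType) (k : nat) (p : {ffun G -> 'I_k}) :
  (\sum_(i < k) #|bundle p i|)%N = #|G|.
Proof.
rewrite -sum1_card (partition_big p xpredT) //=.
apply: eq_bigr => i _; rewrite -sum1_card; apply: eq_bigl => g.
by rewrite /bundle inE.
Qed.

Lemma mms_pos (m kk : nat) (a : 'I_m.+1) : (kk < m.+1)%N ->
  (0 < mms kk.+1 (vv kk a))%N.
Proof.
move=> Hk.
pose p : {ffun 'I_m.+1 -> 'I_kk.+1} := [ffun g => inord (offs a g)].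
apply: (leq_trans _ (leq_bigmax p)).
apply: (big_ind (fun x => 0 < x)%N) => //.
- by rewrite card_ord.
- by move=> x y Hx Hy; rewrite leq_min Hx Hy.
move=> j _; apply/card_gt0P.
have Hj : ((if (a + j < m.+1)%N then (a + j)%N else (a + j - m.+1)%N) < m.+1)%N.
  have := ltn_ord a; have := ltn_ord j; case: (ltnP (a + j) m.+1) => H; lia.
have Ho : offs a (Ordinal Hj) = j.
  rewrite /offs /=; have := ltn_ord a; have := ltn_ord j;
  case: (ltnP (a + j) m.+1) => H1.
    by rewrite leq_addr; lia.
  case: (leqP a (a + j - m.+1)) => H2; lia.
exists (Ordinal Hj); rewrite !inE /vv Ho ltn_ord andbT /p ffunE Ho.
by apply/eqP; apply: val_inj; rewrite /= inordK.
Qed.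

Local Open Scope ring_scope.

Theorem mainTheorem14 (R : realFieldType) (k : nat) (h : R) :
  (2 <= k)%N -> k%:R / (2 * k - 1)%N%:R < h ->
  exists (G : finType) (n : 'I_k -> nat)
         (u : forall i : 'I_k, 'I_(n i) -> G -> bool),
    (forall i, (0 < n i)%N) /\
    forall p : {ffun G -> 'I_k}, ~ @h_democratic_fair R h G k n u p.
Proof.
case: k => [|kk] // Hk Hh.
exists 'I_(2 * kk).+1, (fun _ => (2 * kk).+1), (fun _ a g => vv kk a g).
split => // p Hfair.
have Hkm : (kk < (2 * kk).+1)%N by lia.
have [i Hi] : exists i : 'I_kk.+1, (#|bundle p i| <= 1)%N.
  case: (boolP [exists i : 'I_kk.+1, #|bundle p i| <= 1]%N).
    by move/existsP.
  rewrite negb_exists => /forallP H.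
  have : (\sum_(i < kk.+1) 2 <= \sum_(i < kk.+1) #|bundle p i|)%N.
    by apply: leq_sum => j _; have := H j; rewrite -ltnNge.
  rewrite card_bundles card_ord sum_nat_const card_ord; lia.
have [g0 Hg0] : exists g0, forall g, g \in bundle p i -> g = g0.
  case: (pickP (mem (bundle p i))) => [x Hx|H0].
    exists x => y Hy; by have -> := card_le1_eqP Hi y x Hy Hx.
  by exists ord0 => y Hy; move: (H0 y); rewrite /= Hy.
have Hsub : (#|[set a : 'I_(2 * kk).+1 | pos_mms_fair (vv kk a) p i]|
             <= kk.+1)%N.
  apply: (leq_trans _ (count_vv _ kk g0)); apply: subset_leq_card.
  apply/subsetP => a; rewrite !inE /pos_mms_fair mms_pos //= => /card_gt0P [g].
  by rewrite inE => /andP [/Hg0 -> ].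
have H1 := Hfair i; simpl in H1.
have H2 : h * ((2 * kk).+1)%:R <= (kk.+1)%:R.
  by apply: (le_trans H1); rewrite ler_nat.
have E : (2 * kk.+1 - 1)%N = (2 * kk).+1 by lia.
rewrite E ltr_pdivrMr ?ltr0n // in Hh.
by have := lt_le_trans Hh H2; rewrite ltxx.
Qed.
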